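(* Let $(V^n,g)$ be a Euclidean vector space, $\mathfrak{g}\subseteq\mathfrak{so}(V)$ a Lie subalgebra and $T\in\Lambda^3V\cap(\Lambda^1V\otimes\mathfrak{g})$. Define $R^T(X,Y)=[T_X,T_Y]+2T_{T_XY}$ and $\Omega^T=\frac12\sum_{i}T_{e_i}\wedge T_{e_i}\in\Lambda^4V$. Then: (i) $R^T\in\mathcal{K}(\mathfrak{g},V)$; (ii) $\Omega^T\in\Lambda^4V\cap(\Lambda^2V\otimes\mathfrak{g})$; (iii) $R^T=0$ if and only if $T=0$; (iv) if moreover $(\mathfrak{g},V)$ is irreducible and $\dim\mathcal{K}(\mathfrak{g},V)=1$, then $\langle X\lrcorner T,Y\lrcorner T\rangle=\frac3n|T|^2\langle X,Y\rangle$ for all $X,Y\in V$.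
   Context: $\Lambda^2V$ is identified with $\mathfrak{so}(V)$ via $F\mapsto g(F\cdot,\cdot)$, with the standard inner product on forms ($e_{i_1}\wedge\dots\wedge e_{i_p}$, $i_1<\dots<i_p$, orthonormal). For $T\in\Lambda^3V$, $T_X\in\mathfrak{so}(V)$ is defined by $g(T_X\cdot,\cdot)=X\lrcorner T$; $\{e_i\}$ is an orthonormal basis. $\Lambda^3V\cap(\Lambda^1V\otimes\mathfrak{g})=\{T\in\Lambda^3V:X\lrcorner T\in\mathfrak{g}\ \forall X\}$ and $\Lambda^4V\cap(\Lambda^2V\otimes\mathfrak{g})=\{\beta\in\Lambda^4V:X\lrcorner Y\lrcorner\beta\in\mathfrak{g}\ \forall X,Y\}$. $\mathcal{K}(\mathfrak{g},V)$ is the space of $R\in\Lambda^2V\otimes\Lambda^2V$ with $R(X,Y)\in\mathfrak{g}$ for all $X,Y$ satisfying the first Bianchi identity $\sum_ie_i\wedge R(e_i,X)=0$ for all $X$. *)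

(* Defs.v *)
(* V = R^n realised as row vectors 'rV[R]_n with the standard
   (Euclidean) inner product; R : rcfType (a real closed field, e.g. the reals). *)
From HB Require Import structures.
From mathcomp Require Import all_boot all_order all_algebra.
Set Implicit Arguments. Unset Strict Implicit. Unset Printing Implicit Defensive.
Import Order.TTheory GRing.Theory Num.Theory.
Local Open Scope ring_scope.

Section Defs.
Variables (R : rcfType) (n : nat).

Definition ebas (i : 'I_n) : 'rV[R]_n := delta_mx 0 i.

Definition vdot (X Y : 'rV[R]_n) : R := (X *m Y^T) 0 0.

(* Convention: a matrix F : 'M_n is the endomorphism  v |-> v *m F  of V.
   Then g(F e_j, e_k) = F j k, so the identification so(V) = Lambda^2 V,
   F |-> g(F.,.), sends F to the 2-form with components F j k. *)
Definition act (F : 'M[R]_n) (v : 'rV[R]_n) : 'rV[R]_n := v *m F.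

(* Lie bracket of endomorphisms: [A,B] = A o B - B o A (matrix of A o B is B *m A). *)
Definition lie (A B : 'M[R]_n) : 'M[R]_n := B *m A - A *m B.

Definition so_subalg (G : 'A[R]_n) : Prop :=
  (forall F : 'M[R]_n, (F \in G)%MS -> F^T = - F) /\
  (forall F1 F2 : 'M[R]_n, (F1 \in G)%MS -> (F2 \in G)%MS -> (lie F1 F2 \in G)%MS).

(* 3-forms and 4-forms, by their components w.r.t. the orthonormal basis *)
Definition form3 := 'I_n -> 'I_n -> 'I_n -> R.
Definition form4 := 'I_n -> 'I_n -> 'I_n -> 'I_n -> R.

Definition alt3 (T : form3) : Prop :=
  forall i j k, T i j k = - T j i k /\ T i j k = - T i k j.

Definition alt4 (B : form4) : Prop :=
  forall a b c d, [/\ B a b c d = - B b a c d, B a b c d = - B a c b d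
                    & B a b c d = - B a b d c].

(* T_X : g(T_X Y, Z) = (X _| T)(Y,Z) = T(X,Y,Z) *)
Definition Tx (T : form3) (X : 'rV[R]_n) : 'M[R]_n :=
  \matrix_(j, k) \sum_i X 0 i * T i j k.

Definition RTf (T : form3) (X Y : 'rV[R]_n) : 'M[R]_n :=
  lie (Tx T X) (Tx T Y) + 2 *: Tx T (act (Tx T X) Y).

(* An element of Lambda^2 V (x) Lambda^2 V given by its values on basis pairs,
   extended bilinearly *)
Definition Rapp (Rc : 'I_n -> 'I_n -> 'M[R]_n) (X Y : 'rV[R]_n) : 'M[R]_n :=
  \sum_i \sum_j (X 0 i * Y 0 j) *: Rc i j.

Definition RTc (T : form3) (i j : 'I_n) : 'M[R]_n := RTf T (ebas i) (ebas j).

(* wedge products (determinant convention: e_{i1} ^ ... ^ e_{ip} orthonormal) *)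
Definition wedge12 (a : 'rV[R]_n) (w : 'M[R]_n) : form3 :=
  fun x y z => a 0 x * w y z + a 0 y * w z x + a 0 z * w x y.

Definition wedge22 (u w : 'M[R]_n) : form4 :=
  fun a b c d =>
    u a b * w c d - u a c * w b d + u a d * w b c
  + u b c * w a d - u b d * w a c + u c d * w a b.

Definition OmegaT (T : form3) : form4 :=
  fun a b c d => 2^-1 * \sum_i wedge22 (Tx T (ebas i)) (Tx T (ebas i)) a b c d.

(* X _| Y _| beta, as an element of so(V) = Lambda^2 V *)
Definition contr2 (B : form4) (X Y : 'rV[R]_n) : 'M[R]_n :=
  \matrix_(c, d) \sum_a \sum_b Y 0 a * X 0 b * B a b c d.

(* K(g,V): R in Lambda^2 V (x) Lambda^2 V, R(X,Y) in g, first Bianchi identity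
   sum_i e_i ^ R(e_i,X) = 0 *)
Definition Kmem (G : 'A[R]_n) (Rc : 'I_n -> 'I_n -> 'M[R]_n) : Prop :=
  [/\ (forall i j, Rc i j = - Rc j i),
      (forall i j, (Rc i j)^T = - Rc i j),
      (forall X Y, (Rapp Rc X Y \in G)%MS)
    & (forall X a b c, \sum_i wedge12 (ebas i) (Rapp Rc (ebas i) X) a b c = 0)].

Definition dimK1 (G : 'A[R]_n) : Prop :=
  exists R0, [/\ Kmem G R0, (exists i j, R0 i j != 0)
               & forall Rc, Kmem G Rc -> exists c : R, forall i j, Rc i j = c *: R0 i j].

Definition irreducible (G : 'A[R]_n) : Prop :=
  (0 < n)%N /\
  forall U : 'M[R]_n, (forall F, (F \in G)%MS -> (U *m F <= U)%MS) ->
    (U == (0 : 'M[R]_n))%MS || (U == (1%:M : 'M[R]_n))%MS.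

(* inner products on forms: e_{i1}^...^e_{ip}, i1<...<ip, orthonormal *)
Definition form2_dot (u w : 'M[R]_n) : R :=
  \sum_(a : 'I_n) \sum_(b : 'I_n | (a < b)%N) u a b * w a b.

Definition form3_norm2 (T : form3) : R :=
  \sum_(a : 'I_n) \sum_(b : 'I_n | (a < b)%N) \sum_(c : 'I_n | (b < c)%N) T a b c ^+ 2.

End Defs.

(* Main.v *)
Require Import Defs.
From HB Require Import structures.
From mathcomp Require Import all_boot all_order all_algebra.
From Stdlib Require Import Ring.
Set Implicit Arguments. Unset Strict Implicit. Unset Printing Implicit Defensive.
Import Order.TTheory GRing.Theory Num.Theory.
Local Open Scope ring_scope.

Lemma rth_rcf (R : rcfType) : @ring_theory R 0 1 +%R *%R (fun x y => x - y) -%R eq.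
Proof. split; [exact: add0r|exact: addrC|exact: addrA|exact: mul1r|exact: mulrC|exact: mulrA|exact: mulrDl|by []|exact: subrr]. Qed.
Ltac rnorm := cbv beta iota zeta delta -[Algebra.add GRing.mul Algebra.opp Algebra.zero GRing.one GRing.inv].
Definition NADD (R : rcfType) := ltac:(let t := eval cbv beta iota zeta delta -[Algebra.add GRing.mul Algebra.opp Algebra.zero GRing.one GRing.inv] in (fun x y : R => x + y) in match t with fun x y => @Algebra.add ?s _ _ => exact s end).
Definition rthA (R : rcfType) := ltac:(let t := type of (rth_rcf R) in let t' := eval cbv beta iota zeta delta -[Algebra.add GRing.mul Algebra.opp Algebra.zero GRing.one GRing.inv] in t in
  match t' with @ring_theory _ ?z ?o ?a ?m ?s ?op ?e =>
   let n := eval cbv delta [NADD] in (NADD R) in exact (rth_rcf R : @ring_theory (Algebra.BaseAddMagma.sort n) z o a m s op (@eq (Algebra.BaseAddMagma.sort n))) end).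
Lemma to0 (R : rcfType) (x y : R) : x - y = 0 -> x = y.
Proof. by move/eqP; rewrite subr_eq0 => /eqP. Qed.
Ltac rr := apply: to0; rnorm; match goal with |- @eq _ (@Algebra.add ?s ?l1 ?l2) ?r => change (@eq (Algebra.BaseAddMagma.sort s) (@Algebra.add s l1 l2) r) end; ring.

Section Main.
Variable R : rcfType.
Definition rthR := ltac:(let t := type of (rthA R) in let t2 := eval cbv beta in t in exact (rthA R : t2)).
Add Ring RRing : rthR.

Lemma sec_entry (c y d x : R) : x * y = 1 -> c + c * y * d = (x + d) * (c * y).
Proof. move=> H; transitivity (c * (x * y) + c * y * d); first by rewrite H mulr1. rr. Qed.

Lemma hk (c x P : R) : x != 0 -> c / x * c * (x * P) = c ^+ 2 * P.
Proof.
move=> hx; transitivity (c * c * (x^-1 * x * P)); first rr.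
by rewrite mulVf // mul1r expr2.
Qed.

Lemma delta_ne0 m (i : 'I_m) : delta_mx 0 i != 0 :> 'rV[R]_m.
Proof.
apply/eqP => /matrixP /(_ 0 i); rewrite !mxE !eqxx /= => /eqP; by rewrite oner_eq0.
Qed.

Lemma delta_diag m (i : 'I_m) (d : 'rV[R]_m) :
  (delta_mx 0 i : 'rV[R]_m) *m diag_mx d = d 0 i *: delta_mx 0 i.
Proof.
apply/rowP => j; rewrite mul_mx_diag !mxE eqxx /=.
by case: eqP => [->|]; rewrite ?mulr1 ?mulr0 ?mul1r ?mul0r.
Qed.

Lemma delta_tr m (i : 'I_m) (c : 'rV[R]_m) : ((delta_mx 0 i : 'rV[R]_m) *m c^T) 0 0 = c 0 i.
Proof. by rewrite -rowE !mxE. Qed.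

Lemma arrow_eig m (a : R) (c d : 'rV[R]_m) :
  exists l (w0 : R) (w1 : 'rV[R]_m), ((w0 != 0) || (w1 != 0)) /\
    w0 * a + (w1 *m c^T) 0 0 = l * w0 /\ w0 *: c + w1 *m diag_mx d = l *: w1.
Proof.
case: (pickP (fun i => c 0 i == 0)) => [i /eqP ci0 | cnz].
  exists (d 0 i), 0, (delta_mx 0 i); split; first by rewrite delta_ne0 orbT.
  by rewrite delta_tr ci0 mul0r add0r mulr0 scale0r add0r delta_diag.
case: (boolP [exists i, exists j, (i != j) && (d 0 i == d 0 j)]).
  move=> /existsP [i /existsP [j /andP [ij /eqP dij]]].
  exists (d 0 i), 0, (c 0 j *: delta_mx 0 i - c 0 i *: delta_mx 0 j); split.
    apply/orP; right; apply/eqP => /matrixP /(_ 0 i); rewrite !mxE !eqxx /=.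
    case: eqP => [eij|_]; first by rewrite eij eqxx in ij.
    rewrite mulr1 mulr0 subr0 => /eqP; by rewrite cnz.
  rewrite mul0r add0r mulr0 scale0r add0r mulmxBl -!scalemxAl.
  have e1 : forall (x : R) (k : 'I_m), (x *: ((delta_mx 0 k : 'rV_m) *m c^T)) 0 0 = x * c 0 k.
    by move=> x k; rewrite mxE delta_tr.
  rewrite mxE [X in X + _]e1 mxE e1 [c 0 j * _]mulrC subrr; split => //.
  rewrite mulmxBl -!scalemxAl !delta_diag dij !scalerA scalerBr !scalerA.
  by rewrite [c 0 j * _]mulrC [c 0 i * _]mulrC.
move=> ndist.
move: c d cnz ndist; case: m => [|m] c d cnz ndist.
  exists a, 1, 0; split; first by rewrite oner_eq0.
  split; first by rewrite mul0mx mxE addr0 mul1r mulr1.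
  by apply/rowP => -[].
pose i0 := [arg max_(i > ord0) d 0 i]%O.
have dmax : forall j, d 0 j <= d 0 i0.
  by rewrite /i0; case: arg_maxP => // i _ H j; apply: H.
have dlt : forall j, j != i0 -> d 0 j < d 0 i0.
  move=> j ji; rewrite lt_neqAle dmax andbT; apply/negP => /eqP dj.
  by move/negP: ndist; apply; apply/existsP; exists j; apply/existsP; exists i0; rewrite ji dj /=.
set del := d 0 i0.
pose p : {poly R} := ('X - a%:P) * \prod_j ('X - (d 0 j)%:P)
   - \sum_i ((c 0 i) ^+ 2)%:P * \prod_(j | j != i) ('X - (d 0 j)%:P).
have pE x : p.[x] = (x - a) * \prod_j (x - d 0 j)
                  - \sum_i (c 0 i) ^+ 2 * \prod_(j | j != i) (x - d 0 j).
  rewrite /p hornerD hornerN hornerM hornerXsubC horner_prod horner_sum.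
  congr (_ * _ - _); first by apply: eq_bigr => j _; rewrite hornerXsubC.
  apply: eq_bigr => i _; rewrite hornerM hornerC horner_prod.
  by congr (_ * _); apply: eq_bigr => j _; rewrite hornerXsubC.
have pdel : p.[del] < 0.
  rewrite pE (bigD1 i0) //= subrr mul0r mulr0 sub0r oppr_lt0.
  rewrite (bigD1 i0) //= [X in _ + X]big1 ?addr0.
    apply: mulr_gt0; first by rewrite exprn_even_gt0 //= cnz.
    by apply: prodr_gt0 => j ji; rewrite subr_gt0 dlt.
  move=> i ii; rewrite (bigD1 i0) /=; last by rewrite eq_sym.
  by rewrite subrr mul0r mulr0.
pose sc := \sum_i (c 0 i) ^+ 2.
have sc0 : 0 <= sc by apply: sumr_ge0 => i _; exact: sqr_ge0.
pose b := `|del| + 1 + `|a| + sc.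
have hb : forall j, 1 <= b - d 0 j.
  move=> j; rewrite lerBrDr; apply: (le_trans (y := `|del| + 1)).
    by rewrite addrC lerD2r (le_trans (dmax j)) ?ler_norm.
  by rewrite /b -!addrA lerD2l lerDl addr_ge0.
have hb0 : forall j, 0 <= b - d 0 j by move=> j; exact: le_trans ler01 (hb j).
have pb : 0 <= p.[b].
  rewrite pE subr_ge0.
  set P := \prod_j (b - d 0 j).
  have P0 : 0 <= P by apply: prodr_ge0 => j _.
  apply: (le_trans (y := sc * P)).
    rewrite /sc mulr_suml; apply: ler_sum => i _; apply: ler_wpM2l; first exact: sqr_ge0.
    rewrite /P [X in _ <= X](bigD1 i) //=; apply: ler_peMl; last exact: hb.
    by apply: prodr_ge0 => j _.
  apply: ler_wpM2r => //; rewrite lerBrDr /b addrC lerD2r.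
  by apply: le_trans (ler_norm a) _; rewrite lerDr addr_ge0.
have delb : del <= b.
  by have := hb i0; rewrite lerBrDr => H; apply: le_trans H; rewrite lerDr ler01.
have [t /andP [dt tb] rt] : exists2 t, del <= t <= b & root p t.
  by apply: poly_ivt => //; rewrite (ltW pdel) pb.
have tdel : del < t.
  rewrite lt_neqAle dt andbT; apply/eqP => et; move: rt; rewrite rootE -et.
  by rewrite (lt_eqF pdel).
have htd : forall j, 0 < t - d 0 j.
  by move=> j; rewrite subr_gt0; apply: le_lt_trans (dmax j) tdel.
have hne : forall j, t - d 0 j != 0 by move=> j; rewrite gt_eqF ?htd.
exists t, 1, (\row_j (c 0 j / (t - d 0 j))); split; first by rewrite oner_eq0.
split.
  rewrite mul1r mulr1.
  have Pn : \prod_j (t - d 0 j) != 0 by rewrite gt_eqF // prodr_gt0.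
  have key : (\sum_i c 0 i / (t - d 0 i) * c 0 i) * \prod_j (t - d 0 j)
             = (t - a) * \prod_j (t - d 0 j).
    move: rt; rewrite rootE pE subr_eq0 => /eqP ->.
    rewrite mulr_suml; apply: eq_bigr => i _; rewrite [X in _ * X](bigD1 i) //=.
    by rewrite hk.
  rewrite !mxE; under eq_bigr do rewrite !mxE.
  by rewrite (mulIf Pn key) addrC subrK.
rewrite mul_mx_diag; apply/rowP => j; rewrite !mxE mul1r.
have := sec_entry (c 0 j) (d 0 j) (mulfV (hne j)); rewrite subrK; exact.
Qed.

Lemma vvT m (v : 'rV[R]_m) : (v *m v^T) 0 0 = \sum_i v 0 i ^+ 2.
Proof. by rewrite mxE; apply: eq_bigr => i _; rewrite mxE expr2. Qed.

Lemma vvT_ge0 m (v : 'rV[R]_m) : 0 <= (v *m v^T) 0 0.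
Proof. by rewrite vvT; apply: sumr_ge0 => i _; exact: sqr_ge0. Qed.

Lemma vvT_eq0 m (v : 'rV[R]_m) : (v *m v^T) 0 0 = 0 -> v = 0.
Proof.
rewrite vvT => /psumr_eq0P H; apply/rowP => i; rewrite mxE; apply/eqP.
by rewrite -sqrf_eq0 H // => j _; exact: sqr_ge0.
Qed.

Lemma mx1_tr (A : 'M[R]_1) : A^T = A.
Proof. by rewrite [A]mx11_scalar tr_scalar_mx. Qed.

Definition SpecP m := forall S : 'M[R]_m, S^T = S ->
  exists Q (d : 'rV[R]_m), Q *m Q^T = 1%:M /\ Q *m S *m Q^T = diag_mx d.

Lemma eig_step m : SpecP m -> forall S : 'M[R]_(1 + m), S^T = S ->
  exists l (v : 'rV[R]_(1 + m)), v != 0 /\ v *m S = l *: v.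
Proof.
move=> sp S hS.
have hdr : (drsubmx S)^T = drsubmx S by rewrite trmx_drsub hS.
have [Q [d [hQ hD]]] := sp _ hdr.
have hQ' := mulmx1C hQ.
set c0 := ursubmx S.
have hdl : dlsubmx S = c0^T by rewrite /c0 trmx_ursub hS.
set a := ulsubmx S 0 0.
have hul : ulsubmx S = a%:M by rewrite /a -mx11_scalar.
have [l [w0 [w1 [hnz [e1 e2]]]]] := arrow_eig a (c0 *m Q^T) d.
exists l, (row_mx w0%:M (w1 *m Q)); split.
  rewrite -row_mx0; apply/negP => /eqP /eq_row_mx [h0 h1].
  move: hnz; case/orP => /negP; apply.
    by move/matrixP: h0 => /(_ 0 0); rewrite !mxE /= mulr1n => ->.
  by rewrite -[w1]mulmx1 -hQ mulmxA h1 mul0mx.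
rewrite -{1}(submxK S) hul hdl mul_row_block scale_row_mx.
congr row_mx.
  have -> : w1 *m Q *m c0^T = ((w1 *m (c0 *m Q^T)^T) 0 0)%:M.
    by rewrite -mx11_scalar trmx_mul trmxK mulmxA.
  by rewrite -scalar_mxM -raddfD /= e1 scale_scalar_mx.
rewrite mul_scalar_mx.
have := congr1 (mulmx^~ Q) e2; rewrite -hD /= mulmxDl -!scalemxAl -!mulmxA hQ' !mulmx1.
by rewrite !mulmxA.
Qed.

Lemma usub_row m (M : 'M[R]_(1 + m)) :
  (delta_mx 0 0 : 'rV[R]_(1 + m)) *m M = row_mx (ulsubmx M) (ursubmx M).
Proof.
rewrite hsubmxK -rowE; apply/rowP => j; rewrite !mxE; congr (M _ j); exact: val_inj.
Qed.

Lemma diag1 (l : R) : diag_mx (l%:M : 'rV[R]_1) = l%:M.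
Proof. by apply/matrixP => i j; rewrite !ord1 !mxE. Qed.

Lemma sub3 m n (Y : 'M[R]_(m, n)) (I : 'M[R]_(m, n)) : I - Y - (Y - (Y + Y)) = I.
Proof.
have -> : Y - (Y + Y) = - Y by rewrite opprD addrA subrr sub0r.
by rewrite opprK subrK.
Qed.

Lemma householder m (u : 'rV[R]_(1 + m)) : u *m u^T = 1%:M ->
  exists H : 'M[R]_(1 + m), [/\ H^T = H, H *m H = 1%:M & delta_mx 0 0 *m H = u].
Proof.
move=> huu.
set e0 : 'rV[R]_(1 + m) := delta_mx 0 0.
have ee : e0 *m e0^T = 1%:M.
  by rewrite /e0 trmx_delta mul_delta_mx; apply/matrixP => i j; rewrite !ord1 !mxE.
set w := e0 - u.
set al := (e0 *m w^T) 0 0.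
have hal : e0 *m w^T = al%:M by rewrite /al -mx11_scalar.
have ww : w *m w^T = al%:M + al%:M.
  have h1 : u *m e0^T = (e0 *m u^T) by rewrite -[u]trmxK -trmx_mul mx1_tr trmxK.
  by rewrite -hal /w !linearB /= !mulmxBl ee huu h1 opprB.
case: (eqVneq al 0) => [al0|aln0].
  have w0 : w = 0 by apply: vvT_eq0; rewrite ww !mxE al0 mul0rn addr0.
  exists 1%:M; split; [exact: trmx1 | exact: mulmx1 | ].
  by move/eqP: w0; rewrite subr_eq0 => /eqP <-; rewrite mulmx1.
set X := w^T *m w.
have XT : X^T = X by rewrite /X trmx_mul trmxK.
have XX : X *m X = (al + al) *: X.
  rewrite /X mulmxA -[w^T *m w *m w^T]mulmxA ww mulmxDr mulmxDl !mul_mx_scalar.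
  by rewrite -!scalemxAl scalerDl.
exists (1%:M - al^-1 *: X); split.
- by rewrite linearB /= linearZ /= XT trmx1.
- rewrite mulmxBl mul1mx mulmxBr mulmx1 -scalemxAl -scalemxAr XX !scalerA.
  have -> : al^-1 / al * (al + al) = al^-1 + al^-1.
    by rewrite mulrDr -mulrA mulVf // mulr1.
  by rewrite scalerDl sub3.
- rewrite mulmxBr mulmx1 -scalemxAr /X mulmxA hal mul_scalar_mx scalerA mulVf //.
  by rewrite scale1r /w opprB addrC subrK.
Qed.

Lemma spec_all m : SpecP m.
Proof.
elim: m => [|m IH] S hS.
  by exists 1%:M, 0; split; [rewrite trmx1 mulmx1 | apply/matrixP => -[]].
have [l [v [vn0 hv]]] := eig_step IH hS.
set s := (v *m v^T) 0 0.
have s0 : 0 < s.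
  by rewrite lt_def vvT_ge0 andbT; apply/eqP => /vvT_eq0 h; rewrite h eqxx in vn0.
set u := (Num.sqrt s)^-1 *: v.
have huu : u *m u^T = 1%:M.
  rewrite /u linearZ /= -scalemxAl -scalemxAr scalerA [v *m v^T]mx11_scalar -/s.
  rewrite scale_scalar_mx -invfM -expr2 sqr_sqrtr ?ltW // mulVf //.
  by rewrite gt_eqF.
have hu : u *m S = l *: u by rewrite /u -scalemxAl hv !scalerA mulrC.
have [H [HT HH eH]] := householder huu.
set M := H *m S *m H.
have hM0 : (delta_mx 0 0 : 'rV_(1+m)) *m M = l *: delta_mx 0 0.
  by rewrite /M !mulmxA eH hu -scalemxAl -eH -mulmxA HH mulmx1.
have hMT : M^T = M by rewrite /M !trmx_mul HT hS mulmxA.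
have e1 : (delta_mx 0 0 : 'rV[R]_(1+m)) = row_mx 1%:M 0.
  by rewrite -[delta_mx 0 0]mulmx1 usub_row (scalar_mx_block 1 m) block_mxKul block_mxKur.
have := hM0; rewrite usub_row e1 (@scale_row_mx _ 1 1 m) scaler0 scale_scalar_mx mulr1.
move=> /eq_row_mx [hul hur].
have hdl : dlsubmx M = 0 by rewrite -hMT -trmx_ursub hur linear0.
have hdr : (drsubmx M)^T = drsubmx M by rewrite trmx_drsub hMT.
have [Q' [d' [hQ' hD']]] := IH _ hdr.
set P : 'M[R]_(1 + m) := block_mx 1%:M 0 0 Q'.
have PP : P *m P^T = 1%:M.
  rewrite /P tr_block_mx !linear0 trmx1 mulmx_block !mulmx0 !mul0mx !mulmx1 !addr0 add0r hQ'.
  by rewrite -scalar_mx_block.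
exists (P *m H), (row_mx (l%:M) d'); split.
  by rewrite trmx_mul HT mulmxA -[P *m H *m H]mulmxA HH mulmx1.
have -> : P *m H *m S *m (P *m H)^T = P *m M *m P^T by rewrite trmx_mul HT /M !mulmxA.
have hMb : M = block_mx (l%:M) 0 0 (drsubmx M) by rewrite -{1}(submxK M) hul hur hdl.
rewrite hMb /P tr_block_mx !linear0 trmx1 !mulmx_block.
rewrite !mulmx0 !mul0mx !mulmx1 !mul1mx !addr0 !add0r hD'.
by rewrite mul0mx (@diag_mx_row _ m 1) diag1.
Qed.

Lemma sym_eig m (S : 'M[R]_m.+1) : S^T = S -> exists l (v : 'rV[R]_m.+1), v != 0 /\ v *m S = l *: v.
Proof. by move=> hS; have [l [v [h1 h2]]] := eig_step (@spec_all m) hS; exists l, v. Qed.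

Section Comp.
Variable n : nat.
Implicit Types (T : form3 R n) (X Y : 'rV[R]_n) (A B : 'M[R]_n).

Lemma rearr (m1 m2 : nat) (a : R) (x y z w : 'M[R]_(m1, m2)) :
  a *: x + y - (a *: z + w) = a *: (x - z) + (y - w).
Proof. by rewrite scalerBr opprD addrACA. Qed.

Lemma lin_sum (f : 'rV[R]_n -> 'M[R]_n) :
  (forall a u v, f (a *: u + v) = a *: f u + f v) ->
  forall X, f X = \sum_i X 0 i *: f (ebas R i).
Proof.
move=> hf X.
have f0 : f 0 = 0.
  have := hf 1 0 0; rewrite scaler0 add0r scale1r.
  by move/(congr1 (fun z => z - f 0)); rewrite addrK subrr => H; rewrite -H.
rewrite {1}(row_sum_delta X); elim/big_rec2: _ => [|i y1 y2 _ <-] //.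
Qed.

Lemma bilin_Rapp (f : 'rV[R]_n -> 'rV[R]_n -> 'M[R]_n) :
  (forall a u v Y, f (a *: u + v) Y = a *: f u Y + f v Y) ->
  (forall a u v X, f X (a *: u + v) = a *: f X u + f X v) ->
  forall X Y, f X Y = Rapp (fun i j => f (ebas R i) (ebas R j)) X Y.
Proof.
move=> h1 h2 X Y.
rewrite (lin_sum (f := f^~ Y) (fun a u v => h1 a u v Y) X).
rewrite /Rapp; apply: eq_bigr => i _.
rewrite (lin_sum (f := f (ebas R i)) (fun a u v => h2 a u v (ebas R i)) Y).
by rewrite scaler_sumr; apply: eq_bigr => j _; rewrite scalerA.
Qed.

Lemma TxL T a u v : Tx T (a *: u + v) = a *: Tx T u + Tx T v.
Proof.
apply/matrixP => j k; rewrite !mxE mulr_sumr -big_split /=.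
by apply: eq_bigr => i _; rewrite !mxE mulrDl mulrA.
Qed.

Lemma lieL a A A' B : lie (a *: A + A') B = a *: lie A B + lie A' B.
Proof. by rewrite /lie mulmxDr mulmxDl -scalemxAl -scalemxAr rearr. Qed.

Lemma lieR a A B B' : lie A (a *: B + B') = a *: lie A B + lie A B'.
Proof. by rewrite /lie mulmxDr mulmxDl -scalemxAl -scalemxAr rearr. Qed.

Lemma rearr2 (a : R) (p q r s : 'M[R]_n) :
  a *: p + q + 2 *: (a *: r + s) = a *: (p + 2 *: r) + (q + 2 *: s).
Proof. by rewrite !scalerDr !scalerA mulrC addrACA. Qed.

Lemma RTf_Rapp T X Y : RTf T X Y = Rapp (RTc T) X Y.
Proof.
apply: bilin_Rapp => [a u v Z | a u v Z].
  by rewrite /RTf /act TxL lieL mulmxDr -scalemxAr TxL rearr2.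
by rewrite /RTf /act TxL lieR mulmxDl -scalemxAl TxL rearr2.
Qed.

End Comp.

Section Comp2.
Variable n : nat.
Implicit Types (T : form3 R n) (X Y : 'rV[R]_n) (A B : 'M[R]_n).

Lemma ebasE (i l : 'I_n) : ebas R i 0 l = (l == i)%:R.
Proof. by rewrite mxE eqxx. Qed.

Lemma sum_ebas (i : 'I_n) (F : 'I_n -> R) : \sum_l ebas R i 0 l * F l = F i.
Proof.
rewrite (bigD1 i) //= big1 ?addr0; first by rewrite ebasE eqxx mul1r.
by move=> l /negbTE li; rewrite ebasE li mul0r.
Qed.

Lemma sum_ebas' (a : 'I_n) (F : 'I_n -> R) : \sum_i ebas R i 0 a * F i = F a.
Proof.
rewrite (bigD1 a) //= big1 ?addr0; first by rewrite ebasE eqxx mul1r.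
by move=> l /negbTE li; rewrite ebasE eq_sym li mul0r.
Qed.

Lemma TxE T X j k : Tx T X j k = \sum_i X 0 i * T i j k.
Proof. by rewrite mxE. Qed.

Lemma Tx_e T i j k : Tx T (ebas R i) j k = T i j k.
Proof. by rewrite TxE sum_ebas. Qed.

Lemma lieE A B b c : lie A B b c = \sum_k (B b k * A k c - A b k * B k c).
Proof. by rewrite !mxE sumrB. Qed.

Lemma RTcE T i j b c : RTc T i j b c =
  \sum_k (T j b k * T i k c - T i b k * T j k c) + 2 * \sum_k T i j k * T k b c.
Proof.
rewrite /RTc /RTf mxE lieE mxE TxE; congr (_ + _ * _).
  by apply: eq_bigr => k _; rewrite !Tx_e.
by apply: eq_bigr => k _; rewrite mxE sum_ebas Tx_e.
Qed.

Lemma RappE (Rc : 'I_n -> 'I_n -> 'M[R]_n) X Y b c :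
  Rapp Rc X Y b c = \sum_i \sum_j X 0 i * Y 0 j * Rc i j b c.
Proof. by rewrite summxE; apply: eq_bigr => i _; rewrite summxE; apply: eq_bigr => j _; rewrite mxE. Qed.

Lemma Rapp_e (Rc : 'I_n -> 'I_n -> 'M[R]_n) i Y b c :
  Rapp Rc (ebas R i) Y b c = \sum_j Y 0 j * Rc i j b c.
Proof.
rewrite RappE -(sum_ebas i (fun l => \sum_j Y 0 j * Rc l j b c)); apply: eq_bigr => l _; rewrite mulr_sumr.
by apply: eq_bigr => j _; rewrite mulrA.
Qed.

Lemma bianchi_sum (Rc : 'I_n -> 'I_n -> 'M[R]_n) X a b c :
  \sum_i wedge12 (ebas R i) (Rapp Rc (ebas R i) X) a b c =
  \sum_x X 0 x * (Rc a x b c + Rc b x c a + Rc c x a b).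
Proof.
rewrite /wedge12 !big_split /= !sum_ebas' !Rapp_e -!big_split /=.
by apply: eq_bigr => x _; rewrite !mulrDr.
Qed.

End Comp2.

Section AltT.
Variables (n : nat) (T : form3 R n).
Hypothesis hT : alt3 T.
Implicit Types (X Y : 'rV[R]_n) (A B : 'M[R]_n).

Lemma Tsw1 i j k : T i j k = - T j i k. Proof. by case: (hT i j k). Qed.
Lemma Tsw2 i j k : T i j k = - T i k j. Proof. by case: (hT i j k). Qed.
Lemma Tcyc i j k : T i j k = T j k i.
Proof. by rewrite Tsw1 Tsw2 opprK. Qed.
Lemma Tcyc2 i j k : T i j k = T k i j.
Proof. by rewrite [RHS]Tcyc. Qed.
Lemma Tdiag i k : T i i k = 0.
Proof.
by apply/eqP; move: (Tsw1 i i k) => /eqP; rewrite -addr_eq0 -mulr2n mulrn_eq0.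
Qed.

Lemma TxT X : (Tx T X)^T = - Tx T X.
Proof.
apply/matrixP => j k; rewrite !mxE -sumrN; apply: eq_bigr => i _.
by rewrite (Tsw2 i k j) mulrN.
Qed.

Lemma lieT A B : A^T = - A -> B^T = - B -> (lie A B)^T = - lie A B.
Proof.
move=> hA hB; rewrite /lie linearB /= !trmx_mul hA hB !mulmxN !mulNmx !opprK.
by rewrite opprB.
Qed.

Lemma RTf_skew X Y : (RTf T X Y)^T = - RTf T X Y.
Proof. by rewrite /RTf linearD linearZ /= lieT ?TxT // scalerN [RHS]opprD. Qed.

Lemma RTc_anti i j : RTc T i j = - RTc T j i.
Proof.
apply/matrixP => b c; rewrite [RHS]mxE !RTcE opprD; congr (_ + _).
  by rewrite -sumrN; apply: eq_bigr => k _; rewrite opprB.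
rewrite -mulrN -sumrN; congr (_ * _); apply: eq_bigr => k _.
by rewrite (Tsw1 j i k) mulNr opprK.
Qed.

Lemma RTc_bianchi x a b c : RTc T a x b c + RTc T b x c a + RTc T c x a b = 0.
Proof.
rewrite !RTcE !mulr_sumr -!big_split /=; rewrite big1 // => k _.
rewrite (Tcyc2 a k c) (Tsw2 x k c) (Tsw1 a x k) (Tcyc k b c) (Tcyc2 b k a).
rewrite (Tsw2 x k a) (Tsw1 b x k) (Tcyc k c a) (Tcyc2 c k b) (Tsw2 x k b).
rewrite (Tsw1 c x k) (Tcyc k a b).
move: (T x b k) (T c a k) (T x c k) (T a b k) (T x a k) (T b c k) => p1 q1 p2 q2 p3 q3.
rr.
Qed.

Lemma RTc_jj i j : RTc T i j j i = - (\sum_k T i j k ^+ 2) *+ 3.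
Proof.
rewrite RTcE.
have -> : \sum_k (T j j k * T i k i - T i j k * T j k i) = - \sum_k T i j k ^+ 2.
  rewrite -sumrN; apply: eq_bigr => k _.
  by rewrite Tdiag mul0r sub0r (Tcyc2 j k i) expr2.
have -> : \sum_k T i j k * T k j i = - \sum_k T i j k ^+ 2.
  rewrite -sumrN; apply: eq_bigr => k _.
  by rewrite (Tsw1 k j i) (Tcyc2 j k i) mulrN expr2.
move: (\sum_k _) => S; rr.
Qed.

Lemma RT0_T0 : (forall X Y, RTf T X Y = 0) -> forall i j k, T i j k = 0.
Proof.
move=> h i j k.
have := congr1 (fun M : 'M[R]_n => M j i) (h (ebas R i) (ebas R j)).
rewrite /= -/(RTc T i j) RTc_jj mxE => /eqP.
rewrite mulrn_eq0 /= oppr_eq0 => /eqP /psumr_eq0P H.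
by apply/eqP; rewrite -sqrf_eq0 H // => l _; exact: sqr_ge0.
Qed.

End AltT.

Section Mem.
Variable n : nat.
Implicit Types (G : 'A[R]_n) (A B : 'M[R]_n).

Lemma memG_D G A B : (A \in G)%MS -> (B \in G)%MS -> (A + B \in G)%MS.
Proof. by move=> hA hB; rewrite linearD /= addmx_sub. Qed.

Lemma memG_Z G a A : (A \in G)%MS -> (a *: A \in G)%MS.
Proof. by move=> hA; rewrite linearZ /= scalemx_sub. Qed.

Lemma memG_N G A : (A \in G)%MS -> (- A \in G)%MS.
Proof. by move=> hA; rewrite -scaleN1r memG_Z. Qed.

Lemma memG_B G A B : (A \in G)%MS -> (B \in G)%MS -> (A - B \in G)%MS.
Proof. by move=> hA hB; rewrite memG_D ?memG_N. Qed.

Lemma memG_0 G : ((0 : 'M[R]_n) \in G)%MS.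
Proof. by rewrite linear0 sub0mx. Qed.

Lemma memG_sum G (I : finType) (F : I -> 'M[R]_n) :
  (forall i, (F i \in G)%MS) -> (\sum_i F i \in G)%MS.
Proof.
move=> hF; elim/big_rec: _ => [|i x _ hx]; first exact: memG_0.
by rewrite memG_D.
Qed.

Lemma Rapp_mem G (Rc : 'I_n -> 'I_n -> 'M[R]_n) X Y :
  (forall i j, (Rc i j \in G)%MS) -> (Rapp Rc X Y \in G)%MS.
Proof. by move=> h; apply: memG_sum => i; apply: memG_sum => j; apply: memG_Z. Qed.

End Mem.

Lemma w22_swap1 n (u : 'M[R]_n) a b c d : (forall p q, u p q = - u q p) ->
  wedge22 u u a b c d = - wedge22 u u b a c d.
Proof.
move=> hu; rewrite /wedge22 (hu b a).
move: (u a b) (u a c) (u a d) (u b c) (u b d) (u c d) (u c a) (u d a) (u d b) => *; rr.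
Qed.

Lemma w22_swap2 n (u : 'M[R]_n) a b c d : (forall p q, u p q = - u q p) ->
  wedge22 u u a b c d = - wedge22 u u a c b d.
Proof.
move=> hu; rewrite /wedge22 (hu c b).
move: (u a b) (u a c) (u a d) (u b c) (u b d) (u c d) (u c a) (u d a) (u d b) => *; rr.
Qed.

Lemma w22_swap3 n (u : 'M[R]_n) a b c d : (forall p q, u p q = - u q p) ->
  wedge22 u u a b c d = - wedge22 u u a b d c.
Proof.
move=> hu; rewrite /wedge22 (hu d c).
move: (u a b) (u a c) (u a d) (u b c) (u b d) (u c d) (u c a) (u d a) (u d b) => *; rr.
Qed.

Lemma w22_half n (u : 'M[R]_n) a b c d :
  2^-1 * wedge22 u u a b c d = u a b * u c d - u a c * u b d + u a d * u b c.
Proof.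
have -> : wedge22 u u a b c d = 2 * (u a b * u c d - u a c * u b d + u a d * u b c).
  rewrite /wedge22; move: (u a b) (u a c) (u a d) (u b c) (u b d) (u c d) => *; rr.
by rewrite mulKf // pnatr_eq0.
Qed.

Section Parts12.
Variables (n : nat) (G : 'A[R]_n) (T : form3 R n).
Hypotheses (hG : so_subalg G) (hT : alt3 T) (hTG : forall X, (Tx T X \in G)%MS).

Lemma lie_mem A B : (A \in G)%MS -> (B \in G)%MS -> (lie A B \in G)%MS.
Proof. by case: hG => _ h; apply: h. Qed.

Lemma RTf_mem X Y : (RTf T X Y \in G)%MS.
Proof. by rewrite /RTf memG_D ?lie_mem ?memG_Z. Qed.

Lemma part1 : (forall X Y, RTf T X Y = Rapp (RTc T) X Y) /\ Kmem G (RTc T).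
Proof.
split; first exact: RTf_Rapp.
split.
- exact: RTc_anti.
- by move=> i j; rewrite /RTc RTf_skew.
- by move=> X Y; rewrite -RTf_Rapp RTf_mem.
- move=> X a b c; rewrite bianchi_sum big1 // => x _.
  by rewrite RTc_bianchi // mulr0.
Qed.

Lemma Ti_skew i p q : Tx T (ebas R i) p q = - Tx T (ebas R i) q p.
Proof. by rewrite !Tx_e (Tsw2 hT). Qed.

Lemma part2a : alt4 (OmegaT T).
Proof.
move=> a b c d; rewrite /OmegaT; split; rewrite -mulrN -sumrN; congr (_ * _);
  apply: eq_bigr => i _.
- by apply: w22_swap1 => p q; exact: Ti_skew.
- by apply: w22_swap2 => p q; exact: Ti_skew.
- by apply: w22_swap3 => p q; exact: Ti_skew.
Qed.

End Parts12.

Section Part2b.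
Variables (n : nat) (G : 'A[R]_n) (T : form3 R n).
Hypotheses (hG : so_subalg G) (hT : alt3 T) (hTG : forall X, (Tx T X \in G)%MS).

Lemma contr2_E X Y :
  contr2 (OmegaT T) X Y = lie (Tx T X) (Tx T Y) - Tx T (act (Tx T X) Y).
Proof.
apply/matrixP => c d.
transitivity (\sum_a \sum_b \sum_k (Y 0 a * X 0 b *
   (T k a b * T k c d - T k a c * T k b d + T k a d * T k b c))).
  rewrite mxE; apply: eq_bigr => a _; apply: eq_bigr => b _.
  rewrite /OmegaT mulr_sumr mulr_sumr; apply: eq_bigr => k _.
  by rewrite w22_half !Tx_e.
symmetry.
have e1 : lie (Tx T X) (Tx T Y) c d = \sum_k \sum_a \sum_b
   (Y 0 a * T a c k * (X 0 b * T b k d) - Y 0 a * T a k d * (X 0 b * T b c k)).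
  rewrite lieE; apply: eq_bigr => k _; rewrite !TxE.
  rewrite [X in _ - X]mulrC !mulr_suml -sumrB; apply: eq_bigr => a _.
  by rewrite !mulr_sumr -sumrB.
have e2 : Tx T (act (Tx T X) Y) c d = \sum_k \sum_a \sum_b
   (Y 0 a * (X 0 b * T b a k) * T k c d).
  rewrite TxE; apply: eq_bigr => k _; rewrite mxE mulr_suml; apply: eq_bigr => a _.
  by rewrite TxE mulr_sumr mulr_suml.
rewrite mxE [X in X + _]e1 mxE e2 -sumrB.
under eq_bigr do rewrite -sumrB; under eq_bigr do under eq_bigr do rewrite -sumrB.
rewrite exchange_big; apply: eq_bigr => a _; rewrite exchange_big; apply: eq_bigr => b _.
apply: eq_bigr => k _.
rewrite (Tcyc2 hT a c k) (Tsw2 hT b k d) (Tcyc2 hT b d k) (Tsw2 hT a k d) (Tcyc2 hT a d k).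
rewrite (Tcyc2 hT b c k) (Tcyc2 hT b a k) (Tsw2 hT k b a).
move: (Y 0 a) (X 0 b) (T k a b) (T k c d) (T k a c) (T k b d) (T k a d) (T k b c) => *.
rr.
Qed.

Lemma part2 : alt4 (OmegaT T) /\ (forall X Y, (contr2 (OmegaT T) X Y \in G)%MS).
Proof.
split; first exact: part2a.
by move=> X Y; rewrite contr2_E memG_B ?lie_mem.
Qed.

End Part2b.

Section Kact.
Variables (n : nat) (G : 'A[R]_n).
Hypothesis hG : so_subalg G.
Implicit Types (A B : 'M[R]_n) (Rc : 'I_n -> 'I_n -> 'M[R]_n).

Definition actK A Rc i j :=
  lie A (Rc i j) - \sum_k A i k *: Rc k j - \sum_k A j k *: Rc i k.

Lemma mxEB (A B : 'M[R]_n) b c : (A - B) b c = A b c - B b c.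
Proof. by rewrite !mxE. Qed.

Lemma actKE A Rc i j b c : actK A Rc i j b c = \sum_k
  (Rc i j b k * A k c - A b k * Rc i j k c - A i k * Rc k j b c - A j k * Rc i k b c).
Proof.
rewrite /actK !mxEB !summxE [(Rc i j *m A) b c]mxE [(A *m Rc i j) b c]mxE.
under [X in _ - X - _]eq_bigr do rewrite mxE.
under [X in _ - X]eq_bigr do rewrite mxE.
by rewrite -!sumrB.
Qed.

Lemma Rapp_ee Rc i j : Rapp Rc (ebas R i) (ebas R j) = Rc i j.
Proof. by apply/matrixP => b c; rewrite Rapp_e sum_ebas. Qed.

Lemma Kmem_comp Rc : Kmem G Rc -> forall x a b c, Rc a x b c + Rc b x c a + Rc c x a b = 0.
Proof. by case=> _ _ _ hb x a b c; have := hb (ebas R x) a b c; rewrite bianchi_sum sum_ebas. Qed.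

Lemma skew_e A : A^T = - A -> forall p q, A p q = - A q p.
Proof. by move=> hA p q; have := congr1 (fun M : 'M[R]_n => M q p) hA; rewrite !mxE. Qed.

Lemma K_act A Rc : (A \in G)%MS -> Kmem G Rc -> Kmem G (actK A Rc).
Proof.
move=> hAG hK; have hA : A^T = - A by case: hG => h _; apply: h.
have hAe := skew_e hA.
have hbc := Kmem_comp hK.
case: hK => hanti hskew hmem hbian.
have hae : forall i j b c, Rc i j b c = - Rc j i b c.
  by move=> i j b c; rewrite hanti mxE.
have hse : forall i j b c, Rc i j b c = - Rc i j c b.
  by move=> i j; apply: skew_e.
have hRG : forall i j, (Rc i j \in G)%MS by move=> i j; rewrite -Rapp_ee hmem.
split.
- move=> i j; apply/matrixP => b c; rewrite [RHS]mxE !actKE -sumrN.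
  apply: eq_bigr => k _.
  rewrite (hae i j b k) (hae i j k c) (hae k j b c) (hae i k b c).
  move: (Rc j i b k) (Rc j i k c) (Rc j k b c) (Rc k i b c) (A k c) (A b k) (A i k) (A j k) => *.
  rr.
- move=> i j; apply/matrixP => b c; rewrite [RHS]mxE mxE !actKE -sumrN.
  apply: eq_bigr => k _.
  rewrite (hse i j c k) (hAe k b) (hAe c k) (hse i j k b) (hse k j c b) (hse i k c b).
  move: (Rc i j k c) (A b k) (A k c) (Rc i j b k) (Rc k j b c) (Rc i k b c) (A i k) (A j k) => *.
  rr.
- move=> X Y; apply: Rapp_mem => i j.
  rewrite /actK; apply: memG_B; first apply: memG_B.
  + by apply: lie_mem.
  + by apply: memG_sum => k; apply: memG_Z.
  + by apply: memG_sum => k; apply: memG_Z.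
- move=> X a b c; rewrite bianchi_sum big1 // => x _; apply/eqP; rewrite mulf_eq0; apply/orP; right.
  apply/eqP; rewrite !actKE -!big_split /= big1 // => k _.
  transitivity (- (A x k * (Rc a k b c + Rc b k c a + Rc c k a b)
     + A c k * (Rc a x b k + Rc b x k a + Rc k x a b)
     + A a k * (Rc b x c k + Rc c x k b + Rc k x b c)
     + A b k * (Rc c x a k + Rc a x k c + Rc k x c a))).
    rewrite (hAe k c) (hAe k a) (hAe k b).
    move: (A x k) (A c k) (A a k) (A b k) (Rc a k b c) (Rc b k c a) (Rc c k a b)
      (Rc a x b k) (Rc b x k a) (Rc k x a b) (Rc b x c k) (Rc c x k b) (Rc k x b c)
      (Rc c x a k) (Rc a x k c) (Rc k x c a) => *.
    rr.
  by rewrite (hbc k a b c) (hbc x a b k) (hbc x b c k) (hbc x c a k) !mulr0 !addr0 oppr0.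
Qed.

Definition Smx Rc : 'M[R]_n := \matrix_(x, y) \sum_i Rc i x y i.

Lemma Smx_act A Rc : A^T = - A -> Smx (actK A Rc) = Smx Rc *m A - A *m Smx Rc.
Proof.
move=> hA; have hAe := skew_e hA.
apply/matrixP => x y; rewrite mxEB !mxE.
under eq_bigr do rewrite actKE !sumrB.
rewrite !sumrB.
have e13 : \sum_i \sum_k A i k * Rc k x y i = \sum_i \sum_k Rc i x y k * A k i.
  by rewrite exchange_big; apply: eq_bigr => i _; apply: eq_bigr => k _; rewrite mulrC.
have e2 : \sum_i \sum_k A y k * Rc i x k i = - \sum_j Smx Rc x j * A j y.
  rewrite exchange_big -sumrN; apply: eq_bigr => k _.
  by rewrite mxE -mulr_sumr (hAe k y) mulrN opprK mulrC.
have e4 : \sum_i \sum_k A x k * Rc i k y i = \sum_j A x j * Smx Rc j y.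
  by rewrite exchange_big; apply: eq_bigr => k _; rewrite mxE mulr_sumr.
rewrite e13 e2 e4.
move: (\sum_i \sum_k _) (\sum_j Smx Rc x j * A j y) (\sum_j A x j * Smx Rc j y) => *.
rr.
Qed.

End Kact.

Lemma schur n (G : 'A[R]_n) (B : 'M[R]_n) : irreducible G -> B^T = B ->
  (forall F, (F \in G)%MS -> F *m B = B *m F) -> exists c, B = c%:M.
Proof.
case: n G B => [|m] G B [//= n0 hirr] hB hc.
have [l [v [vn0 hv]]] := sym_eig hB.
set U := kermx (B - l%:M).
have hU : forall F, (F \in G)%MS -> (U *m F <= U)%MS.
  move=> F hF; apply/sub_kermxP; rewrite -mulmxA mulmxBr (hc F hF) mul_mx_scalar.
  by rewrite -mul_scalar_mx -mulmxBl mulmxA mulmx_ker mul0mx.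
have vU : (v <= U)%MS by apply/sub_kermxP; rewrite mulmxBr hv mul_mx_scalar subrr.
exists l; case/orP: (hirr U hU) => /andP [h1 h2].
  by have := submx_trans vU h1; rewrite submx0 (negbTE vn0).
move/sub_kermxP: h2; rewrite mul1mx => /eqP; rewrite subr_eq0 => /eqP //.
Qed.

Section Final.
Variables (n : nat) (T : form3 R n).
Hypothesis hT : alt3 T.

Definition Bmx : 'M[R]_n := \matrix_(x, y) \sum_a \sum_b T x a b * T y a b.

Lemma Bmx_sym : Bmx^T = Bmx.
Proof.
by apply/matrixP => x y; rewrite !mxE; apply: eq_bigr => a _; apply: eq_bigr => b _; exact: mulrC.
Qed.

Lemma Smx_RT : Smx (RTc T) = - (Bmx *+ 3).
Proof.
apply/matrixP => x y; rewrite !mxE.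
transitivity (\sum_i - (\sum_k T x k i * T y k i) *+ 3).
  apply: eq_bigr => i _; rewrite RTcE.
  have -> : \sum_k (T x y k * T i k i - T i y k * T x k i) = - \sum_k T x k i * T y k i.
    rewrite -sumrN; apply: eq_bigr => k _.
    by rewrite (Tsw2 hT i k i) (Tdiag hT) oppr0 mulr0 sub0r (Tcyc hT i y k) mulrC.
  have -> : \sum_k T i x k * T k y i = - \sum_k T x k i * T y k i.
    rewrite -sumrN; apply: eq_bigr => k _.
    by rewrite (Tcyc hT i x k) (Tsw1 hT k y i) mulrN.
  by move: (\sum_k _) => s; rr.
have e : \sum_i \sum_k T x k i * T y k i = \sum_a \sum_b T x a b * T y a b.
  by rewrite exchange_big.
rewrite sumrMnl sumrN e.
by move: (\sum_a _) => s; rr.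
Qed.

End Final.

Section Count.
Variable n : nat.

Lemma ind3 (x a : 'I_n) : 1 = (x < a)%:R + (a < x)%:R + (x == a :> nat)%:R :> R.
Proof. by case: ltngtP => _; rewrite ?addr0 ?add0r. Qed.

Lemma sum2D (F G : 'I_n -> 'I_n -> R) :
  \sum_a \sum_b (F a b + G a b) = \sum_a \sum_b F a b + \sum_a \sum_b G a b.
Proof. by rewrite -big_split; apply: eq_bigr => a _; rewrite big_split. Qed.

Lemma sum3D (F G : 'I_n -> 'I_n -> 'I_n -> R) :
  \sum_x \sum_a \sum_b (F x a b + G x a b) =
  \sum_x \sum_a \sum_b F x a b + \sum_x \sum_a \sum_b G x a b.
Proof. by rewrite -big_split; apply: eq_bigr => x _; rewrite sum2D. Qed.

Lemma form2E (u w : 'M[R]_n) : (forall p q, u p q = - u q p) -> (forall p q, w p q = - w q p) ->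
  form2_dot u w = 2^-1 * \sum_a \sum_b u a b * w a b.
Proof.
move=> hu hw.
have Fs : forall a b, u a b * w a b = u b a * w b a by move=> a b; rewrite (hu a b) (hw a b) mulrNN.
have Fd : forall a, u a a * w a a = 0.
  move=> a; have := hu a a; move/eqP; rewrite -addr_eq0 -mulr2n mulrn_eq0 /= => /eqP ->.
  by rewrite mul0r.
set P := \sum_(a : 'I_n) \sum_(b : 'I_n) (a < b)%:R * (u a b * w a b).
have hP : form2_dot u w = P.
  rewrite /form2_dot /P; apply: eq_bigr => a _; rewrite big_mkcond; apply: eq_bigr => b _.
  by case: (a < b)%N; rewrite ?mul1r ?mul0r.
have hfull : \sum_a \sum_b u a b * w a b = P + P.
  transitivity (\sum_(a : 'I_n) \sum_(b : 'I_n) ((a < b)%:R * (u a b * w a b) + (b < a)%:R * (u a b * w a b)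
                 + (a == b :> nat)%:R * (u a b * w a b))).
    by apply: eq_bigr => a _; apply: eq_bigr => b _; rewrite -!mulrDl -ind3 mul1r.
  rewrite !sum2D [X in _ + _ + X]big1 ?addr0; last first.
    move=> a _; rewrite big1 // => b _; case: eqP => [/val_inj ->|]; first by rewrite Fd mulr0.
    by rewrite mul0r.
  congr (_ + _); rewrite exchange_big; apply: eq_bigr => a _; apply: eq_bigr => b _.
  by rewrite Fs.
rewrite hP hfull -[P + P]mulr2n -[P *+ 2]mulr_natl mulKf //.
by rewrite pnatr_eq0.
Qed.

End Count.

Section Count3.
Variables (n : nat) (T : form3 R n).
Hypothesis hT : alt3 T.

Let Q x a b := T x a b ^+ 2.

Lemma Qs1 x a b : Q x a b = Q a x b. Proof. by rewrite /Q (Tsw1 hT x a b) sqrrN. Qed.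
Lemma Qs2 x a b : Q x a b = Q x b a. Proof. by rewrite /Q (Tsw2 hT x a b) sqrrN. Qed.
Lemma Qc x a b : Q x a b = Q a b x. Proof. by rewrite /Q (Tcyc hT x a b). Qed.
Lemma Qz1 x b : Q x x b = 0. Proof. by rewrite /Q (Tdiag hT) expr0n. Qed.
Lemma Qz2 x a : Q x a a = 0.
Proof.
rewrite /Q; have := Tsw2 hT x a a; move/eqP; rewrite -addr_eq0 -mulr2n mulrn_eq0 /=.
by move/eqP ->; rewrite expr0n.
Qed.
Lemma Qz3 x a : Q x a x = 0. Proof. by rewrite Qs1 Qz2. Qed.

Lemma normE : form3_norm2 T =
  \sum_(x : 'I_n) \sum_(a : 'I_n) \sum_(b : 'I_n) (x < a)%:R * ((a < b)%:R * Q x a b).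
Proof.
rewrite /form3_norm2; apply: eq_bigr => x _; rewrite big_mkcond; apply: eq_bigr => a _.
case: (x < a)%N; rewrite ?mul1r ?mul0r.
  by rewrite big_mkcond; apply: eq_bigr => b _; case: (a < b)%N; rewrite ?mul1r ?mul0r.
by rewrite big1 // => b _; rewrite mul0r.
Qed.

Lemma count6 : \sum_(x : 'I_n) \sum_(a : 'I_n) \sum_(b : 'I_n) T x a b ^+ 2 = form3_norm2 T *+ 6.
Proof.
set N := form3_norm2 T.
set M1 := \sum_(x : 'I_n) \sum_(a : 'I_n) \sum_(b : 'I_n) (x < a)%:R * Q x a b.
set M1' := \sum_(x : 'I_n) \sum_(a : 'I_n) \sum_(b : 'I_n) (x < a)%:R * ((b < a)%:R * Q x a b).
have s1 : \sum_(x : 'I_n) \sum_(a : 'I_n) \sum_(b : 'I_n) T x a b ^+ 2 = M1 + M1.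
  transitivity (\sum_(x : 'I_n) \sum_(a : 'I_n) \sum_(b : 'I_n) ((x < a)%:R * Q x a b + (a < x)%:R * Q x a b
                 + (x == a :> nat)%:R * Q x a b)).
    apply: eq_bigr => x _; apply: eq_bigr => a _; apply: eq_bigr => b _.
    by rewrite -!mulrDl -ind3 mul1r.
  rewrite !sum3D [X in _ + _ + X]big1 ?addr0; last first.
    move=> x _; rewrite big1 // => a _; rewrite big1 // => b _.
    by case: eqP => [/val_inj ->|]; [rewrite Qz1 mulr0 | rewrite mul0r].
  congr (_ + _); rewrite exchange_big; apply: eq_bigr => x _; apply: eq_bigr => a _.
  by apply: eq_bigr => b _; rewrite Qs1.
have s2 : M1 = N + M1'.
  rewrite /N normE /M1 /M1' -sum3D.
  apply: eq_bigr => x _; apply: eq_bigr => a _; apply: eq_bigr => b _.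
  rewrite -mulrDr -mulrDl.
  have := ind3 a b; case: eqP => [/val_inj ->|_]; first by rewrite Qz2 !mulr0.
  by rewrite addr0 => <-; rewrite mul1r.
have s3 : M1' = N + N.
  transitivity (\sum_(x : 'I_n) \sum_(a : 'I_n) \sum_(b : 'I_n) ((x < b)%:R * ((b < a)%:R * Q x a b)
                   + (b < x)%:R * ((x < a)%:R * Q x a b))).
    apply: eq_bigr => x _; apply: eq_bigr => a _; apply: eq_bigr => b _.
    case: (ltngtP x b) => h.
    - rewrite mul1r mul0r addr0; case hba: (b < a)%N; last by rewrite !mul0r mulr0.
      by rewrite (ltn_trans h hba) mul1r.
    - rewrite mul0r mul1r add0r; case hxa: (x < a)%N; last by rewrite !mul0r.
      by rewrite (ltn_trans h hxa) !mul1r.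
    - by rewrite (val_inj h) Qz3 !mulr0 addr0.
  rewrite sum3D /N !normE; congr (_ + _).
    apply: eq_bigr => x _; rewrite exchange_big; apply: eq_bigr => a _; apply: eq_bigr => b _.
    by rewrite Qs2.
  under eq_bigr do rewrite exchange_big.
  rewrite exchange_big; apply: eq_bigr => x _; apply: eq_bigr => a _; apply: eq_bigr => b _.
  by rewrite [Q x a b]Qc.
by rewrite s1 s2 s3 !mulrS mulr0n addr0 !addrA.
Qed.

End Count3.

Lemma Smx_scale n (c : R) (Rc Rc' : 'I_n -> 'I_n -> 'M[R]_n) :
  (forall i j, Rc' i j = c *: Rc i j) -> Smx Rc' = c *: Smx Rc.
Proof.
move=> h; apply/matrixP => x y; rewrite !mxE mulr_sumr; apply: eq_bigr => i _.
by rewrite h mxE.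
Qed.

Lemma trSS n (S : 'M[R]_n) : \tr (S *m S^T) = \sum_x \sum_y S x y ^+ 2.
Proof.
by apply: eq_bigr => x _; rewrite mxE; apply: eq_bigr => y _; rewrite mxE expr2.
Qed.

Lemma trSS0 n (S : 'M[R]_n) : \tr (S *m S^T) = 0 -> S = 0.
Proof.
rewrite trSS => h0.
have H1 := psumr_eq0P (fun x _ => sumr_ge0 _ (fun y _ => sqr_ge0 (S x y))) h0.
apply/matrixP => x y; rewrite mxE.
have H2 := psumr_eq0P (fun y _ => sqr_ge0 (S x y)) (H1 x isT).
by apply/eqP; rewrite -sqrf_eq0 H2.
Qed.

Section Part34.
Variables (n : nat) (G : 'A[R]_n) (T : form3 R n).
Hypotheses (hG : so_subalg G) (hT : alt3 T) (hTG : forall X, (Tx T X \in G)%MS).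

Lemma part3 : (forall X Y, RTf T X Y = 0) <-> (forall i j k, T i j k = 0).
Proof.
split; first exact: RT0_T0.
move=> h0 X Y.
have Tx0 : forall Z, Tx T Z = 0.
  by move=> Z; apply/matrixP => j k; rewrite !mxE big1 // => i _; rewrite h0 mulr0.
by rewrite /RTf !Tx0 /lie mulmx0 subrr add0r scaler0.
Qed.

Lemma sumTT X Y : \sum_a \sum_b Tx T X a b * Tx T Y a b =
  \sum_x \sum_y X 0 x * Y 0 y * Bmx T x y.
Proof.
transitivity (\sum_a \sum_b \sum_x \sum_y X 0 x * T x a b * (Y 0 y * T y a b)).
  apply: eq_bigr => a _; apply: eq_bigr => b _; rewrite !TxE mulr_suml.
  by apply: eq_bigr => x _; rewrite mulr_sumr.
under eq_bigr do rewrite exchange_big.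
under eq_bigr do under eq_bigr do rewrite exchange_big.
rewrite exchange_big; apply: eq_bigr => x _.
rewrite exchange_big; apply: eq_bigr => y _.
rewrite mxE mulr_sumr; apply: eq_bigr => a _; rewrite mulr_sumr; apply: eq_bigr => b _.
move: (X 0 x) (T x a b) (Y 0 y) (T y a b) => *; rr.
Qed.

Lemma part4 : irreducible G -> dimK1 G -> forall X Y,
  form2_dot (Tx T X) (Tx T Y) = 3 / n%:R * form3_norm2 T * vdot X Y.
Proof.
move=> hirr [R0 [hK0 _ huniq]] X Y.
have hK := (part1 hG hT hTG).2.
have [mu hmu] := huniq _ hK.
set S := Smx (RTc T).
have hS : S = (- 3%:R) *: Bmx T by rewrite /S Smx_RT // -scaler_nat scaleNr.
have ST : S^T = S by rewrite hS linearZ /= Bmx_sym.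
have hcomm : forall A, (A \in G)%MS -> A *m Bmx T = Bmx T *m A.
  move=> A hA; have hAs : A^T = - A by case: hG => h _; apply: h.
  suff : S *m A = A *m S.
    rewrite hS -scalemxAl -scalemxAr => /scalerI -> //.
    by rewrite oppr_eq0 pnatr_eq0.
  have [c1 hc1] := huniq _ (K_act hG hA hK).
  case: (eqVneq mu 0) => [mu0|mun0].
    have S0 : S = 0.
      apply/matrixP => x y; rewrite !mxE big1 // => i _.
      by rewrite hmu mu0 scale0r mxE.
    by rewrite S0 mul0mx mulmx0.
  have hact : forall i j, actK A (RTc T) i j = (c1 / mu) *: RTc T i j.
    by move=> i j; rewrite hc1 hmu scalerA divfK.
  have e : (c1 / mu) *: S = S *m A - A *m S by rewrite -Smx_act // (Smx_scale hact).
  have tr0 : (c1 / mu) * \tr (S *m S^T) = 0.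
    rewrite ST -mxtraceZ scalemxAr e mulmxBr !mulmxA raddfB /=.
    by rewrite [\tr (S *m A *m S)]mxtrace_mulC mulmxA subrr.
  move/eqP: tr0; rewrite mulf_eq0 => /orP [/eqP k0 | /eqP t0].
    by move: e; rewrite k0 scale0r => /eqP; rewrite eq_sym subr_eq0 => /eqP.
  by rewrite (trSS0 t0) mul0mx mulmx0.
have [be hbe] := schur hirr (Bmx_sym T) hcomm.
case: hirr => n0 _.
have hn : n%:R != 0 :> R by rewrite pnatr_eq0 -lt0n.
have htr : be *+ n = form3_norm2 T *+ 6.
  rewrite -mxtrace_scalar -hbe -(count6 hT); apply: eq_bigr => x _; rewrite mxE.
  by apply: eq_bigr => a _; apply: eq_bigr => b _; rewrite expr2.
have hsk : forall Z p q, Tx T Z p q = - Tx T Z q p.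
  by move=> Z; apply: skew_e; exact: TxT.
rewrite form2E // sumTT hbe.
have -> : \sum_x \sum_y X 0 x * Y 0 y * (be%:M : 'M[R]_n) x y = be * vdot X Y.
  rewrite /vdot mxE mulr_sumr; apply: eq_bigr => x _.
  rewrite (bigD1 x) //= big1 ?addr0; first by rewrite !mxE eqxx mulr1n mulrC.
  by move=> y /negbTE yx; rewrite mxE eq_sym yx mulr0n mulr0.
have hb : be = form3_norm2 T *+ 6 / n%:R.
  by rewrite -htr -[be *+ n]mulr_natr mulfK.
rewrite hb; move: (form3_norm2 T) (vdot X Y) (n%:R) hn => N v k hk.
transitivity ((2^-1 * 2) * (3 * N * k^-1 * v)); first rr.
by rewrite mulVf ?pnatr_eq0 // mul1r; rr.
Qed.

End Part34.

End Main.

Theorem lemma3p1 (R : rcfType) (n : nat) (G : 'A[R]_n) (T : form3 R n) :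
  so_subalg G -> alt3 T -> (forall X : 'rV[R]_n, (Tx T X \in G)%MS) ->
  [/\ (forall X Y, RTf T X Y = Rapp (RTc T) X Y) /\ Kmem G (RTc T),
      alt4 (OmegaT T) /\ (forall X Y, (contr2 (OmegaT T) X Y \in G)%MS),
      ((forall X Y, RTf T X Y = 0) <-> (forall i j k, T i j k = 0))
    & (irreducible G -> dimK1 G ->
       forall X Y, form2_dot (Tx T X) (Tx T Y) = 3 / n%:R * form3_norm2 T * vdot X Y)].
Proof.
move=> hG hT hTG; split.
- exact: part1.
- exact: part2.
- exact: part3.
- exact: part4.
Qed.
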